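(* Let $(X,d)$ be a bicomplete quasi-pseudometric space. Let $J:X\to X$ be a continuous single-valued map such that $r\,d(x,y)\le d(Jx,Jy)$ for all $x,y\in X$, for some constant $r>0$. Let $F:X\to CB(X)$ be a set-valued map such that $$H(Fx,Fy)\le \alpha\, d(Jx,Jy)\quad\text{for all }x,y\in X,$$ where $\alpha\in(0,1)$ and $r\alpha<1$. If $J$ and $F$ have the approximate mix-point property, then $F$ has a $J$-fixed point, i.e. there is $x\in X$ with $Jx\in Fx$.
   Context: A quasi-pseudometric on a nonempty set $X$ is a map $d:X\times X\to[0,\infty)$ with $d(x,x)=0$ and $d(x,z)\le d(x,y)+d(y,z)$ for all $x,y,z$; it is $T_0$ if $d(x,y)=0=d(y,x)$ implies $x=y$. Write $d^s(x,y)=\max\{d(x,y),d(y,x)\}$. The space $(X,d)$ is bicomplete if $d$ is $T_0$ and the metric $d^s$ is complete. For $x\in X$ and nonempty $A\subseteq X$: $d(x,A)=\inf_{a\in A}d(x,a)$, $d(A,x)=\inf_{a\in A}d(a,x)$. For nonempty $A,B\subseteq X$: $H(A,B)=\max\{\sup_{a\in A}d(a,B),\ \sup_{b\in B}d(A,b)\}$. $CB(X)$ denotes the family of nonempty $d^s$-bounded, $\tau(d^s)$-closed subsets of $X$; continuity of $J$ is with respect to $\tau(d^s)$. $J$ and $F$ have the approximate mix-point property if $\inf_{x\in X}\sup_{y\in Fx}d^s(Jx,y)=0$. *)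

(* Defs.v *)
From Stdlib Require Import Reals Lra.
Open Scope R_scope.

Definition quasi_pseudometric {X : Type} (d : X -> X -> R) : Prop :=
  (forall x y, 0 <= d x y) /\ (forall x, d x x = 0) /\
  (forall x y z, d x z <= d x y + d y z).

Definition T0 {X : Type} (d : X -> X -> R) : Prop :=
  forall x y, d x y = 0 -> d y x = 0 -> x = y.

Definition ds {X : Type} (d : X -> X -> R) (x y : X) : R := Rmax (d x y) (d y x).

Definition ds_cauchy {X : Type} (d : X -> X -> R) (u : nat -> X) : Prop :=
  forall e, 0 < e -> exists N, forall m n, (N <= m)%nat -> (N <= n)%nat -> ds d (u m) (u n) < e.

Definition ds_converges {X : Type} (d : X -> X -> R) (u : nat -> X) (x : X) : Prop :=
  forall e, 0 < e -> exists N, forall n, (N <= n)%nat -> ds d (u n) x < e.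

Definition bicomplete {X : Type} (d : X -> X -> R) : Prop :=
  T0 d /\ forall u, ds_cauchy d u -> exists x, ds_converges d u x.

(* CB(X): nonempty, d^s-bounded, tau(d^s)-closed subsets *)
Definition CB {X : Type} (d : X -> X -> R) (A : X -> Prop) : Prop :=
  (exists a, A a) /\
  (exists M, forall a b, A a -> A b -> ds d a b <= M) /\
  (forall x, (forall e, 0 < e -> exists a, A a /\ ds d x a < e) -> A x).

Definition ds_continuous {X : Type} (d : X -> X -> R) (J : X -> X) : Prop :=
  forall x e, 0 < e -> exists del, 0 < del /\
    forall y, ds d x y < del -> ds d (J x) (J y) < e.

(* H(A,B) <= c, unfolded:
   sup_{a in A} inf_{b in B} d(a,b) <= c  and  sup_{b in B} inf_{a in A} d(a,b) <= c *)
Definition H_le {X : Type} (d : X -> X -> R) (A B : X -> Prop) (c : R) : Prop :=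
  (forall a, A a -> forall e, 0 < e -> exists b, B b /\ d a b < c + e) /\
  (forall b, B b -> forall e, 0 < e -> exists a, A a /\ d a b < c + e).

(* approximate mix-point property: inf_x sup_{y in Fx} d^s(Jx,y) = 0 *)
Definition approx_mix_point {X : Type} (d : X -> X -> R) (J : X -> X)
  (F : X -> X -> Prop) : Prop :=
  forall e, 0 < e -> exists x, forall y, F x y -> ds d (J x) y < e.

(* Main.v *)
Require Import Defs.
From Stdlib Require Import Reals Lra Psatz ClassicalEpsilon.
Open Scope R_scope.

Lemma le_eps (a b : R) : (forall e, 0 < e -> a < b + e) -> a <= b.
Proof.
  intros H. destruct (Rle_or_lt a b) as [h|h]; auto.
  assert (h2 : 0 < (a-b)/2) by lra. specialize (H _ h2). lra.
Qed.

Lemma ds_l {X} (d : X->X->R) a b : d a b <= ds d a b.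
Proof. unfold ds; apply Rmax_l. Qed.
Lemma ds_r {X} (d : X->X->R) a b : d b a <= ds d a b.
Proof. unfold ds; apply Rmax_r. Qed.
Lemma ds_lt {X} (d : X->X->R) a b e : d a b < e -> d b a < e -> ds d a b < e.
Proof. unfold ds; intros; apply Rmax_lub_lt; auto. Qed.

Lemma en_small (c : R) : 0 < c -> exists N, forall n, (N <= n)%nat -> / (INR n + 1) < c.
Proof.
  intros Hc. destruct (archimed_cor1 c Hc) as [N [HN HN0]].
  exists N. intros n Hn.
  apply Rle_lt_trans with (/ INR N); auto.
  apply Rinv_le_contravar.
  - apply lt_0_INR; auto.
  - apply le_INR in Hn; lra.
Qed.

Theorem mainTheorem5 (X : Type) (d : X -> X -> R) (J : X -> X) (F : X -> X -> Prop)
  (r alpha : R)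
  (Hd : quasi_pseudometric d) (Hbi : bicomplete d)
  (HJc : ds_continuous d J)
  (Hr : 0 < r) (HJ : forall x y, r * d x y <= d (J x) (J y))
  (HF : forall x, CB d (F x))
  (Ha0 : 0 < alpha) (Ha1 : alpha < 1) (Hra : r * alpha < 1)
  (HH : forall x y, H_le d (F x) (F y) (alpha * d (J x) (J y)))
  (Hmix : approx_mix_point d J F) :
  exists x, F x (J x).
Proof.
  destruct Hd as [Hnn [Hxx Htri]].
  destruct Hbi as [_ Hcomp].
  set (en := fun n:nat => / (INR n + 1)).
  assert (Hen : forall n, 0 < en n).
  { intro n; unfold en; apply Rinv_0_lt_compat; pose proof (pos_INR n); lra. }
  set (xs := fun n => proj1_sig (constructive_indefinite_description _ (Hmix _ (Hen n)))).
  assert (Hxs : forall n y, F (xs n) y -> ds d (J (xs n)) y < en n).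
  { intros n. unfold xs. destruct (constructive_indefinite_description _ _) as [z Hz]; simpl; exact Hz. }
  assert (HD : forall n m, (1 - alpha) * d (J (xs n)) (J (xs m)) <= en n + en m).
  { intros n m. apply le_eps. intros eps Heps.
    destruct (HF (xs n)) as [[y Hy] _].
    destruct (HH (xs n) (xs m)) as [H1 _].
    destruct (H1 y Hy eps Heps) as [z [Hz Hyz]].
    pose proof (Hxs n y Hy) as E1. pose proof (Hxs m z Hz) as E2.
    pose proof (ds_l d (J (xs n)) y). pose proof (ds_r d (J (xs m)) z).
    pose proof (Htri (J (xs n)) y (J (xs m))). pose proof (Htri y z (J (xs m))).
    lra. }
  assert (Hd2 : forall n m, (1 - alpha) * r * d (xs n) (xs m) <= en n + en m).
  { intros n m. pose proof (HD n m). pose proof (HJ (xs n) (xs m)).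
    assert (0 < 1 - alpha) by lra. nra. }
  assert (Hcau : ds_cauchy d xs).
  { intros e He. assert (hc : 0 < e * ((1 - alpha) * r) / 2).
    { assert (0 < 1 - alpha) by lra. assert (0 < (1-alpha)*r) by nra.
      assert (0 < e * ((1-alpha)*r)) by nra. lra. }
    destruct (en_small _ hc) as [N HN]. exists N. intros m n Hm Hn.
    pose proof (HN m Hm). pose proof (HN n Hn).
    fold (en m) in *. fold (en n) in *.
    pose proof (Hd2 m n). pose proof (Hd2 n m).
    assert (0 < 1 - alpha) by lra. assert (hp : 0 < (1-alpha)*r) by nra.
    apply ds_lt.
    - apply (Rmult_lt_reg_l ((1-alpha)*r)); auto. nra.
    - apply (Rmult_lt_reg_l ((1-alpha)*r)); auto. nra. }
  destruct (Hcomp _ Hcau) as [x Hx].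
  exists x.
  assert (HJx : forall e, 0 < e -> exists N, forall n, (N <= n)%nat -> ds d (J x) (J (xs n)) < e).
  { intros e He. destruct (HJc x e He) as [del [Hdel Hdl]].
    destruct (Hx del Hdel) as [N HN]. exists N. intros n Hn.
    apply Hdl. unfold ds in *. rewrite Rmax_comm. apply HN; auto. }
  destruct (HF x) as [_ [_ Hcl]]. apply Hcl.
  intros e He.
  set (del := e / 7). assert (Hdel : 0 < del) by (unfold del; lra).
  destruct (HJx del Hdel) as [N1 HN1].
  destruct (en_small del Hdel) as [N2 HN2].
  set (n := (N1 + N2)%nat).
  assert (h1 : ds d (J x) (J (xs n)) < del) by (apply HN1; unfold n; lia).
  assert (h2 : en n < del) by (apply HN2; unfold n; lia).
  destruct (HF (xs n)) as [[y Hy] _].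
  pose proof (Hxs n y Hy) as Ey.
  destruct (HH (xs n) x) as [Ha _].
  destruct (Ha y Hy del Hdel) as [a [Hax Hya]].
  destruct (HH x (xs n)) as [Hb _].
  destruct (Hb a Hax del Hdel) as [b [Hbn Hab]].
  pose proof (Hxs n b Hbn) as Eb.
  exists a. split; auto.
  pose proof (ds_l d (J x) (J (xs n))). pose proof (ds_r d (J x) (J (xs n))).
  pose proof (ds_l d (J (xs n)) y). pose proof (ds_r d (J (xs n)) y).
  pose proof (ds_r d (J (xs n)) b).
  pose proof (Hnn (J (xs n)) (J x)). pose proof (Hnn (J x) (J (xs n))).
  assert (alpha * d (J (xs n)) (J x) <= d (J (xs n)) (J x)) by nra.
  assert (alpha * d (J x) (J (xs n)) <= d (J x) (J (xs n))) by nra.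
  pose proof (Htri (J x) (J (xs n)) y). pose proof (Htri (J x) y a).
  pose proof (Htri a b y). pose proof (Htri b (J (xs n)) y).
  pose proof (Htri a y (J (xs n))). pose proof (Htri a (J (xs n)) (J x)).
  pose proof (Htri a y (J x)). pose proof (Htri y (J (xs n)) (J x)).
  assert (Hde : del = e/7) by reflexivity. clearbody del en.
  apply ds_lt; lra.
Qed.
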